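(* Let $S_\psi\subset\mathbb{R}^3$ be the surface of revolution parametrized by $(r,\theta)\mapsto(\psi(r)\cos\theta,\psi(r)\sin\theta,\chi(r))$, $(r,\theta)\in[r_1,r_2]\times[0,2\pi)$, and let $\Omega=\{(\psi(r)\cos\theta,\psi(r)\sin\theta,\chi(r)) : r\in[0,a],\ \theta\in(0,2\pi]\}$ with $r_1\le0<a\le r_2$. Let $0<R_1<R_2<a$, $\beta>0$, $B>\overline B:=\max_{[0,a]}|(\psi'/\psi)'|$, let $z_1$ be the solution of $\big[\frac{(\psi z)'}{\psi}\big]'-Bz=0$ in $[0,R_1)$ with $z(0)=0$, $z'(0)=1$, let $z_2$ be the solution of the same equation in $(R_2,a]$ with $z(a)=\beta$, $z'(a)=-1$, and let $z=z_\beta$ be defined by $z=z_1$ on $[0,R_1)$, $z=z_3$ on $[R_1,R_2]$, $z=z_2$ on $(R_2,a]$, where $z_3$ is any positive smooth function such that $z$ is smooth on $[0,a]$. Then there exists $f\in C^1(\mathbb{R})$ such that $Z(r):=\int_0^rz(s)\,ds$ ($r\in[0,a]$) is a stationary solution of $$\Delta Z+f(Z)=0\text{ in }\Omega,\qquad\frac{\partial Z}{\partial\nu}+\alpha Z=0\text{ on }\partial\Omega,\qquad\text{with }\ \alpha=-\frac{\beta}{\int_0^az(r)\,dr},$$ and $Z$ satisfies $$L_a\big[H_a\alpha^2Z(a)^2+\alpha Z(a)f(Z(a))+\alpha^3Z(a)^2\big]+L_0\big[H_0\alpha^2Z(0)^2+\alpha Z(0)f(Z(0))+\alpha^3Z(0)^2\big]<0,$$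 where $L_0=2\pi\psi(0)$, $L_a=2\pi\psi(a)$, $H_a=-\frac{\psi'(a)}{\psi(a)}$, $H_0=\frac{\psi'(0)}{\psi(0)}$.
   Context: Here $r\mapsto(\psi(r),\chi(r))$ is a simple regular plane curve, $\psi\in C^2([r_1,r_2])$, $\psi>0$ on $[r_1,r_2]$, $(\psi')^2+(\chi')^2=1$, and $\chi'(0)>0$, $\chi'(a)>0$. $S_\psi$ carries the metric $dr^2+\psi(r)^2d\theta^2$, with Laplace–Beltrami operator $\Delta u=u_{rr}+\frac{\psi'}{\psi}u_r+\frac1{\psi^2}u_{\theta\theta}$; $\partial\Omega$ consists of the circles $r=0$ and $r=a$ with outer unit normal $\nu=-\partial_r$ on $r=0$ and $\nu=\partial_r$ on $r=a$. A radial function $Z(r)$ is viewed as a function on $\Omega$. *)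

(* Defs.v *)
From Stdlib Require Import Reals.
From Coquelicot Require Import Coquelicot.
Open Scope R_scope.

Definition C1_R (f : R -> R) : Prop :=
  forall x, ex_derive f x /\ continuous (Derive f) x.

Definition C2_R (f : R -> R) : Prop :=
  forall x, ex_derive f x /\ ex_derive (Derive f) x /\
            continuous (Derive (Derive f)) x.

(* Laplace--Beltrami operator of the metric dr^2 + psi(r)^2 dtheta^2,
   in the coordinates (r, theta):
   Delta u = u_rr + (psi'/psi) u_r + (1/psi^2) u_thth. *)
Definition LB (psi : R -> R) (u : R -> R -> R) (r th : R) : R :=
  Derive (fun s => Derive (fun t => u t th) s) r
  + Derive psi r / psi r * Derive (fun t => u t th) r
  + / (psi r ^ 2) * Derive (fun t => Derive (fun s => u r s) t) th.

Definition radial (Z : R -> R) : R -> R -> R := fun r _ => Z r.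

(* outer normal derivative on the two boundary circles r = 0 (nu = -d_r)
   and r = a (nu = d_r) *)
Definition dnu_0 (u : R -> R -> R) (th : R) : R :=
  - Derive (fun t => u t th) 0.
Definition dnu_a (a : R) (u : R -> R -> R) (th : R) : R :=
  Derive (fun t => u t th) a.

Definition stationary_solution (psi : R -> R) (a : R) (f : R -> R)
    (alpha : R) (Z : R -> R) : Prop :=
  (forall r, 0 <= r <= a -> ex_derive Z r /\ ex_derive (Derive Z) r) /\
  (forall r th, 0 <= r <= a -> 0 < th <= 2 * PI ->
     LB psi (radial Z) r th + f (Z r) = 0) /\
  (forall th, 0 < th <= 2 * PI ->
     dnu_0 (radial Z) th + alpha * radial Z 0 th = 0 /\
     dnu_a a (radial Z) th + alpha * radial Z a th = 0).

(* Main.v *)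
Require Import Defs.
From Stdlib Require Import Reals Lra ClassicalEpsilon Ranalysis5.
From Coquelicot Require Import Coquelicot.
Open Scope R_scope.
Lemma isd_mult (f g : R -> R) x df dg : is_derive f x df -> is_derive g x dg ->
  is_derive (fun t => f t * g t) x (df * g x + f x * dg).
Proof. intros H1 H2. apply (is_derive_mult f g x df dg H1 H2). intros; apply Rmult_comm. Qed.

Lemma isd_plus (f g : R -> R) x df dg : is_derive f x df -> is_derive g x dg ->
  is_derive (fun t => f t + g t) x (df + dg).
Proof. intros H1 H2. apply (is_derive_plus f g x df dg H1 H2). Qed.

Lemma isd_minus (f g : R -> R) x df dg : is_derive f x df -> is_derive g x dg ->
  is_derive (fun t => f t - g t) x (df - dg).
Proof. intros H1 H2. apply (is_derive_minus f g x df dg H1 H2). Qed.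

Lemma cont_plus (f g : R -> R) x : continuous f x -> continuous g x -> continuous (fun t => f t + g t) x.
Proof. intros; apply (continuous_plus f g x); auto. Qed.
Lemma cont_minus (f g : R -> R) x : continuous f x -> continuous g x -> continuous (fun t => f t - g t) x.
Proof. intros; apply (continuous_minus f g x); auto. Qed.
Lemma cont_mult (f g : R -> R) x : continuous f x -> continuous g x -> continuous (fun t => f t * g t) x.
Proof. intros; apply (continuous_mult f g x); auto. Qed.
Lemma cont_div (f g : R -> R) x : continuous f x -> continuous g x -> g x <> 0 -> continuous (fun t => f t / g t) x.
Proof. intros. unfold Rdiv. apply cont_mult; auto. apply continuous_Rinv_comp; auto. Qed.

Lemma pos_loc (f : R -> R) x : continuous f x -> 0 < f x -> locally x (fun y => 0 < f y).
Proof.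
  intros Hc Hp. apply continuity_pt_filterlim in Hc.
  apply continuity_pt_locally with (eps := mkposreal _ Hp) in Hc.
  revert Hc. apply filter_imp. intros u Hu; simpl in Hu.
  apply Rabs_lt_between in Hu. lra.
Qed.

Lemma cont_pt_of_der f x : ex_derive f x -> continuity_pt f x.
Proof. intro H. apply continuity_pt_filterlim. exact (ex_derive_continuous f x H). Qed.

Lemma loc_const_C1 (g : R -> R) (c : R) (lo hi : Rbar) (y : R) :
  Rbar_lt lo y -> Rbar_lt y hi ->
  (forall t : R, Rbar_lt lo t -> Rbar_lt t hi -> g t = c) ->
  ex_derive g y /\ continuous (Derive g) y.
Proof.
  intros H1 H2 H.
  assert (Hd : forall t : R, Rbar_lt lo t -> Rbar_lt t hi -> is_derive g t 0).
  { intros t Ht1 Ht2. apply is_derive_ext_loc with (f := fun _ => c).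
    - apply (locally_interval _ t lo hi Ht1 Ht2). intros u Hu1 Hu2. symmetry; auto.
    - apply (is_derive_const c t). }
  split. { exists 0. auto. }
  apply continuous_ext_loc with (fun _ => 0).
  - apply (locally_interval _ y lo hi H1 H2). intros u Hu1 Hu2. symmetry. apply is_derive_unique. auto.
  - apply continuous_const.
Qed.

Lemma mono_of_der (f df : R -> R) x y : x <= y ->
  (forall c, x <= c <= y -> is_derive f c (df c)) ->
  (forall c, x <= c <= y -> 0 <= df c) -> f x <= f y.
Proof.
  intros Hxy Hd Hp. destruct (Req_dec x y) as [->|Hne]; [lra|].
  destruct (MVT_cor2 f df x y) as [c [Hc1 Hc2]]; [lra| |].
  - intros c Hc. apply is_derive_Reals. auto.
  - assert (0 <= df c) by (apply Hp; lra). assert (0 <= df c * (y - x)) by (apply Rmult_le_pos; lra). lra.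
Qed.

Lemma strict_of_der (f df : R -> R) x y : x < y ->
  (forall c, x <= c <= y -> is_derive f c (df c)) ->
  (forall c, x < c < y -> 0 < df c) -> f x < f y.
Proof.
  intros Hxy Hd Hp.
  destruct (MVT_cor2 f df x y) as [c [Hc1 Hc2]]; [lra| |].
  - intros c Hc. apply is_derive_Reals. auto.
  - assert (0 < df c) by (apply Hp; lra). assert (0 < df c * (y - x)) by (apply Rmult_lt_0_compat; lra). lra.
Qed.

Lemma const_of_der (f df : R -> R) x y : x <= y ->
  (forall c, x <= c <= y -> is_derive f c (df c)) ->
  (forall c, x <= c <= y -> df c = 0) -> f x = f y.
Proof.
  intros Hxy Hd Hp. destruct (Req_dec x y) as [->|Hne]; [lra|].
  destruct (MVT_cor2 f df x y) as [c [Hc1 Hc2]]; [lra| |].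
  - intros c Hc. apply is_derive_Reals. auto.
  - rewrite Hp in Hc1 by lra. lra.
Qed.

Theorem lemma5p5
  (psi chi : R -> R) (r1 r2 a R1 R2 beta B : R) (z : R -> R)
  (* the profile curve *)
  (Hr : r1 <= 0 < a /\ a <= r2)
  (Hpsi_C2 : C2_R psi)
  (Hpsi_pos : forall r, r1 <= r <= r2 -> 0 < psi r)
  (Hchi_diff : forall r, ex_derive chi r)
  (Hunit : forall r, r1 <= r <= r2 ->
             (Derive psi r) ^ 2 + (Derive chi r) ^ 2 = 1)
  (Hsimple : forall r s, r1 <= r <= r2 -> r1 <= s <= r2 ->
             psi r = psi s -> chi r = chi s -> r = s)
  (Hchi0 : 0 < Derive chi 0) (Hchia : 0 < Derive chi a)
  (* parameters *)
  (HR : 0 < R1 /\ R1 < R2 /\ R2 < a)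
  (Hbeta : 0 < beta)
  (* B > Bbar = max_[0,a] |(psi'/psi)'| *)
  (HB : forall r, 0 <= r <= a ->
        Rabs (Derive (fun s => Derive psi s / psi s) r) < B)
  (* z = z_beta : smooth (C^2) on [0,a] *)
  (Hz_C2 : C2_R z)
  (* z = z1 on [0,R1) *)
  (Hz1 : forall r, 0 <= r < R1 ->
         Derive (fun s => Derive (fun t => psi t * z t) s / psi s) r
         - B * z r = 0)
  (Hz1_0 : z 0 = 0) (Hz1_0' : Derive z 0 = 1)
  (* z = z2 on (R2,a] *)
  (Hz2 : forall r, R2 < r <= a ->
         Derive (fun s => Derive (fun t => psi t * z t) s / psi s) r
         - B * z r = 0)
  (Hz2_a : z a = beta) (Hz2_a' : Derive z a = -1)
  (* z = z3 > 0 on [R1,R2] *)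
  (Hz3 : forall r, R1 <= r <= R2 -> 0 < z r) :
  let Z := fun r => RInt z 0 r in
  let alpha := - beta / RInt z 0 a in
  let L0 := 2 * PI * psi 0 in
  let La := 2 * PI * psi a in
  let Ha := - (Derive psi a / psi a) in
  let H0 := Derive psi 0 / psi 0 in
  exists f : R -> R,
    C1_R f /\
    stationary_solution psi a f alpha Z /\
    La * (Ha * alpha ^ 2 * (Z a) ^ 2 + alpha * Z a * f (Z a)
          + alpha ^ 3 * (Z a) ^ 2)
    + L0 * (H0 * alpha ^ 2 * (Z 0) ^ 2 + alpha * Z 0 * f (Z 0)
          + alpha ^ 3 * (Z 0) ^ 2) < 0.
Proof.
  intros Z alpha L0 La Ha H0.
  destruct Hr as [[Hr1 Ha0] Har2].
  destruct HR as [HR1 [HR12 HR2a]].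
  assert (Hpd : forall x, ex_derive psi x) by (intro x; apply Hpsi_C2).
  assert (Hpdd : forall x, ex_derive (Derive psi) x) by (intro x; apply Hpsi_C2).
  assert (Hpc : forall x, continuous psi x) by (intro x; exact (ex_derive_continuous _ _ (Hpd x))).
  assert (Hp'c : forall x, continuous (Derive psi) x) by (intro x; exact (ex_derive_continuous _ _ (Hpdd x))).
  assert (Hp''c : forall x, continuous (Derive (Derive psi)) x) by (intro x; apply Hpsi_C2).
  assert (Hzd : forall x, ex_derive z x) by (intro x; apply Hz_C2).
  assert (Hzdd : forall x, ex_derive (Derive z) x) by (intro x; apply Hz_C2).
  assert (Hzc : forall x, continuous z x) by (intro x; exact (ex_derive_continuous _ _ (Hzd x))).
  assert (Hz'c : forall x, continuous (Derive z) x) by (intro x; exact (ex_derive_continuous _ _ (Hzdd x))).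
  assert (Hz''c : forall x, continuous (Derive (Derive z)) x) by (intro x; apply Hz_C2).
  assert (Hpos : forall r, 0 <= r <= a -> 0 < psi r) by (intros r Hr; apply Hpsi_pos; lra).
  assert (Hposl : forall r, 0 <= r <= a -> locally r (fun y => 0 < psi y))
    by (intros r Hr; apply pos_loc; auto).
  set (p := fun s => Derive psi s / psi s).
  set (pd := fun s => (Derive (Derive psi) s * psi s - Derive psi s * Derive psi s) / psi s ^ 2).
  assert (Hp_der : forall y, psi y <> 0 -> is_derive p y (pd y)).
  { intros y Hy. unfold p, pd.
    apply (is_derive_div (Derive psi) psi y); auto; apply Derive_correct; auto. }
  assert (Hp_cont : forall y, psi y <> 0 -> continuous p y).
  { intros y Hy. apply cont_div; auto. }
  assert (Hpd_cont : forall r, 0 <= r <= a -> continuous (Derive p) r).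
  { intros r Hr. apply continuous_ext_loc with pd.
    - generalize (Hposl r Hr); apply filter_imp. intros y Hy. symmetry.
      apply is_derive_unique. apply Hp_der. lra.
    - unfold pd. assert (psi r <> 0) by (specialize (Hpos r Hr); lra).
      apply cont_div.
      + apply cont_minus; apply cont_mult; auto.
      + apply (continuous_ext (fun s => psi s * (psi s * 1))). intros; simpl; ring.
        apply cont_mult; auto. apply cont_mult; auto. apply continuous_const.
      + simpl. rewrite Rmult_1_r. apply Rmult_integral_contrapositive_currified; auto. }
  set (w := fun s => Derive (fun t => psi t * z t) s / psi s).
  assert (Hw_eq : forall s, psi s <> 0 -> w s = p s * z s + Derive z s).
  { intros s Hs. unfold w, p. rewrite Derive_mult; auto. field; auto. }
  set (wd := fun r => Derive (Derive z) r + Derive p r * z r + p r * Derive z r).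
  assert (Hw_der : forall r, 0 <= r <= a -> is_derive w r (wd r)).
  { intros r Hr. assert (Hr0 : psi r <> 0) by (specialize (Hpos r Hr); lra).
    apply is_derive_ext_loc with (fun s => p s * z s + Derive z s).
    - generalize (Hposl r Hr); apply filter_imp. intros y Hy. symmetry. apply Hw_eq. lra.
    - unfold wd. replace (Derive (Derive z) r + Derive p r * z r + p r * Derive z r)
        with ((Derive p r * z r + p r * Derive z r) + Derive (Derive z) r) by ring.
      apply isd_plus. apply isd_mult.
      + rewrite (is_derive_unique _ _ _ (Hp_der r Hr0)). auto.
      + apply Derive_correct; auto.
      + apply Derive_correct; auto. }
  assert (Hwd_cont : forall r, 0 <= r <= a -> continuous wd r).
  { intros r Hr. assert (Hr0 : psi r <> 0) by (specialize (Hpos r Hr); lra).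
    unfold wd. apply cont_plus. apply cont_plus. auto.
    apply cont_mult; auto. apply cont_mult; auto. }
  assert (Hode1 : forall r, 0 <= r < R1 -> wd r = B * z r).
  { intros r Hr. specialize (Hz1 r Hr).
    rewrite <- (is_derive_unique _ _ _ (Hw_der r ltac:(lra))). fold w in Hz1. lra. }
  assert (Hode2 : forall r, R2 < r <= a -> wd r = B * z r).
  { intros r Hr. specialize (Hz2 r Hr).
    rewrite <- (is_derive_unique _ _ _ (Hw_der r ltac:(lra))). fold w in Hz2. lra. }
  assert (Hzcont : continuity z) by (intro x; apply cont_pt_of_der; auto).
  set (V := fun s => psi s * z s * Derive z s).
  set (Vd := fun s => (Derive psi s * z s + psi s * Derive z s) * Derive z s + psi s * z s * Derive (Derive z) s).
  assert (HV_der : forall s, is_derive V s (Vd s)).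
  { intro s. unfold V, Vd. apply (isd_mult (fun t => psi t * z t) (Derive z)); [apply (isd_mult psi z)|]; apply Derive_correct; auto. }
  assert (HVd : forall r, (0 <= r < R1 \/ R2 < r <= a) -> 0 <= Vd r).
  { intros r Hr. assert (Hr' : 0 <= r <= a) by lra.
    assert (Hw : wd r = B * z r) by (destruct Hr; [apply Hode1|apply Hode2]; lra).
    assert (Hb : Derive p r < B).
    { specialize (HB r Hr'). apply Rabs_lt_between in HB. unfold p. lra. }
    assert (Hps := Hpos r Hr').
    assert (Hz'' : Derive (Derive z) r = B * z r - Derive p r * z r - p r * Derive z r)
      by (unfold wd in Hw; lra).
    unfold Vd. rewrite Hz''.
    replace ((Derive psi r * z r + psi r * Derive z r) * Derive z r +
       psi r * z r * (B * z r - Derive p r * z r - p r * Derive z r))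
      with (psi r * (Derive z r * Derive z r) + psi r * (B - Derive p r) * (z r * z r))
      by (unfold p; field; lra).
    apply Rplus_le_le_0_compat.
    - apply Rmult_le_pos; [lra|]. apply Rle_0_sqr.
    - apply Rmult_le_pos; [apply Rmult_le_pos; lra|]. apply Rle_0_sqr. }
  assert (HVmono : forall x y, x <= y -> ((0 <= x /\ y < R1) \/ (R2 < x /\ y <= a)) -> V x <= V y).
  { intros x y Hxy Hxy'. apply (mono_of_der V Vd); auto. intros c Hc. apply HVd. lra. }
  assert (Hzpos2 : forall r, R2 < r <= a -> 0 < z r).
  { assert (HVa : V a < 0).
    { unfold V. rewrite Hz2_a, Hz2_a'. specialize (Hpos a ltac:(lra)).
      assert (0 < psi a * beta) by (apply Rmult_lt_0_compat; lra). lra. }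
    assert (Hnz : forall c, R2 < c <= a -> z c <> 0).
    { intros c Hc Hzc0. assert (V c <= V a) by (apply HVmono; lra).
      unfold V at 1 in H. rewrite Hzc0 in H. lra. }
    intros r Hr. destruct (Rlt_or_le 0 (z r)) as [Hlt|Hle]; auto.
    exfalso. assert (Hr0 : z r < 0) by (specialize (Hnz r Hr); lra).
    destruct (Req_dec r a) as [->|Hra]; [lra|].
    destruct (IVT z r a Hzcont) as [c [Hc1 Hc2]]; try lra.
    apply (Hnz c); lra. }
  assert (Hzpos1 : forall r, 0 < r < R1 -> 0 < z r).
  { assert (Hl := pos_loc (Derive z) 0 (Hz'c 0) ltac:(lra)).
    destruct Hl as [d Hd].
    assert (Hd' : forall y, Rabs y < d -> 0 < Derive z y).
    { intros y Hy. apply Hd. unfold ball; simpl; unfold AbsRing_ball, abs, minus, plus, opp; simpl.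
      replace (y + - 0) with y by ring. exact Hy. }
    assert (Hd0 := cond_pos d).
    assert (Hsmall : forall r, 0 < r < d -> 0 < z r).
    { intros r Hr. rewrite <- Hz1_0. apply (strict_of_der z (Derive z)); try lra.
      - intros c _. apply Derive_correct; auto.
      - intros c Hc. apply Hd'. rewrite Rabs_right; lra. }
    set (e := Rmin (d / 2) (R1 / 2)).
    assert (He : 0 < e /\ e < d /\ e < R1).
    { unfold e. split; [apply Rmin_glb_lt; lra|]. split.
      - apply Rle_lt_trans with (d/2); [apply Rmin_l|lra].
      - apply Rle_lt_trans with (R1/2); [apply Rmin_r|lra]. }
    assert (HVe : 0 < V e).
    { unfold V. apply Rmult_lt_0_compat; [apply Rmult_lt_0_compat|].
      - apply Hpos; lra. - apply Hsmall; lra. - apply Hd'. rewrite Rabs_right; lra. }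
    intros r Hr. destruct (Rlt_or_le r d) as [Hrd|Hrd]; [apply Hsmall; lra|].
    assert (Hnz : forall c, e <= c < R1 -> z c <> 0).
    { intros c Hc Hzc0. assert (V e <= V c) by (apply HVmono; lra).
      unfold V at 2 in H. rewrite Hzc0 in H. lra. }
    destruct (Rlt_or_le 0 (z r)) as [Hlt|Hle]; auto.
    exfalso. assert (Hr0 : z r < 0) by (specialize (Hnz r ltac:(lra)); lra).
    assert (Hze : 0 < z e) by (apply Hsmall; lra).
    destruct (IVT (fun t => - z t) e r) as [c [Hc1 Hc2]]; try lra.
    { apply continuity_opp. exact Hzcont. }
    apply (Hnz c); lra. }
  assert (Hzpos : forall r, 0 < r <= a -> 0 < z r).
  { intros r Hr. destruct (Rlt_or_le r R1); [apply Hzpos1; lra|].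
    destruct (Rle_or_lt r R2); [apply Hz3; lra|apply Hzpos2; lra]. }
  assert (Hznn : forall r, 0 <= r <= a -> 0 <= z r).
  { intros r Hr. destruct (Req_dec r 0) as [->|]; [lra|]. left; apply Hzpos; lra. }
  assert (HZd : forall r, is_derive Z r (z r)).
  { intro r. apply (is_derive_RInt z Z 0 r); auto.
    apply filter_forall. intro b. exact (RInt_correct z 0 b (ex_RInt_continuous z 0 b (fun t _ => Hzc t))). }
  assert (HZ0 : Z 0 = 0) by (unfold Z; rewrite RInt_point; reflexivity).
  assert (HZinc : forall x y, 0 <= x -> x < y -> y <= a -> Z x < Z y).
  { intros x y Hx Hxy Hy. apply (strict_of_der Z z); auto. intros c Hc. apply Hzpos. lra. }
  assert (HZle : forall x y, 0 <= x -> x <= y -> y <= a -> Z x <= Z y).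
  { intros x y Hx Hxy Hy. destruct (Req_dec x y) as [->|]; [lra|]. left; apply HZinc; lra. }
  assert (HZinj : forall x y, 0 <= x <= a -> 0 <= y <= a -> Z x = Z y -> x = y).
  { intros x y Hx Hy He. destruct (Rtotal_order x y) as [H|[H|H]]; auto.
    - specialize (HZinc x y ltac:(lra) H ltac:(lra)). lra.
    - specialize (HZinc y x ltac:(lra) H ltac:(lra)). lra. }
  assert (HZa : 0 < Z a) by (rewrite <- HZ0; apply HZinc; lra).
  assert (HZcont : continuity Z).
  { intro x. apply cont_pt_of_der. exists (z x). auto. }
  set (cl := fun y => Rmax 0 (Rmin y (Z a))).
  assert (Hcl : forall y, 0 <= cl y <= Z a).
  { intro y. unfold cl, Rmax, Rmin. destruct (Rle_dec y (Z a)); destruct (Rle_dec 0 _); lra. }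
  assert (Hcl_id : forall y, 0 <= y <= Z a -> cl y = y).
  { intros y Hy. unfold cl, Rmax, Rmin. destruct (Rle_dec y (Z a)); destruct (Rle_dec 0 _); lra. }
  assert (Hex : forall y, exists r, 0 <= r <= a /\ Z r = cl y).
  { intro y. destruct (Hcl y) as [Hc1 Hc2].
    destruct (Req_dec (cl y) 0) as [E|E]; [exists 0; split; [lra|congruence]|].
    destruct (Req_dec (cl y) (Z a)) as [E'|E']; [exists a; split; [lra|congruence]|].
    destruct (IVT (fun t => Z t - cl y) 0 a) as [c [Hc3 Hc4]]; try lra.
    - apply continuity_minus; auto. apply continuity_const. intros ? ?; reflexivity.
    - exists c. split; lra. }
  set (phi := fun y => proj1_sig (constructive_indefinite_description _ (Hex y))).
  assert (Hphi : forall y, 0 <= phi y <= a /\ Z (phi y) = cl y).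
  { intro y. unfold phi. destruct (constructive_indefinite_description _ (Hex y)) as [r Hr]. exact Hr. }
  assert (Hphi_Z : forall r, 0 <= r <= a -> phi (Z r) = r).
  { intros r Hr. destruct (Hphi (Z r)) as [H1 H2]. apply HZinj; auto.
    rewrite H2. apply Hcl_id. split; [rewrite <- HZ0|]; apply HZle; lra. }
  assert (Hphi0 : phi 0 = 0).
  { destruct (Hphi 0) as [H1 H2]. apply HZinj; [lra|lra|]. rewrite H2, HZ0. apply Hcl_id. lra. }
  assert (Hphia : phi (Z a) = a) by (apply Hphi_Z; lra).
  assert (Hcomp : forall x, 0 <= x <= Z a -> comp Z phi x = id x).
  { intros x Hx. unfold comp, id. destruct (Hphi x) as [_ H2]. rewrite H2. apply Hcl_id; auto. }
  assert (HphiC : forall y, 0 < y < Z a -> continuity_pt phi y).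
  { intros y Hy. apply (continuity_pt_recip_interv Z phi 0 a).
    - lra.
    - intros x y' Hx Hxy Hy'. apply HZinc; lra.
    - intros x Hx1 Hx2. apply Hcomp. rewrite HZ0 in Hx1. lra.
    - intros x _ _. apply Hphi.
    - intros t Ht. apply HZcont.
    - rewrite HZ0. auto. }
  assert (Hphi_pos : forall y, 0 < y <= Z a -> 0 < phi y).
  { intros y Hy. destruct (Hphi y) as [H1 H2]. destruct (Req_dec (phi y) 0) as [E|E]; [|lra].
    rewrite E, HZ0, Hcl_id in H2; lra. }
  assert (Hphi_der : forall y, 0 < y < Z a -> is_derive phi y (/ z (phi y))).
  { intros y Hy.
    assert (Prf : forall t, phi 0 <= t <= phi (Z a) -> derivable_pt Z t).
    { intros t _. exists (z t). apply is_derive_Reals. auto. }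
    assert (Hinc : phi 0 <= phi y <= phi (Z a)).
    { rewrite Hphi0, Hphia. apply Hphi. }
    assert (Hzy : 0 < z (phi y)).
    { apply Hzpos. split; [apply Hphi_pos; lra|apply Hphi]. }
    assert (Hdp : derive_pt Z (phi y) (Prf (phi y) Hinc) = z (phi y)).
    { apply derive_pt_eq_0. apply is_derive_Reals. auto. }
    pose proof (derivable_pt_lim_recip_interv Z phi 0 (Z a) y Prf (HphiC y Hy) HZa Hy Hinc Hcomp) as Hl.
    rewrite Hdp in Hl. apply is_derive_Reals. replace (/ z (phi y)) with (1 / z (phi y)) by (field; lra).
    apply Hl. lra. }
  set (H := fun r => B * Z r - w r).
  set (Hd := fun r => B * z r - wd r).
  assert (HH_der : forall r, 0 <= r <= a -> is_derive H r (Hd r)).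
  { intros r Hr. unfold H, Hd. apply isd_minus; [apply is_derive_scal; auto|apply Hw_der; auto]. }
  assert (HHc1 : forall r, 0 <= r < R1 -> H r = H 0).
  { intros r Hr. symmetry. apply (const_of_der H Hd); try lra.
    - intros c Hc. apply HH_der. lra.
    - intros c Hc. unfold Hd. rewrite Hode1; lra. }
  assert (HHc2 : forall r, R2 < r <= a -> H r = H a).
  { intros r Hr. apply (const_of_der H Hd); try lra.
    - intros c Hc. apply HH_der. lra.
    - intros c Hc. unfold Hd. rewrite Hode2; lra. }
  assert (HZR1 : 0 < Z R1) by (rewrite <- HZ0; apply HZinc; lra).
  assert (HZR12 : Z R1 < Z R2) by (apply HZinc; lra).
  assert (HZR2 : Z R2 < Z a) by (apply HZinc; lra).
  assert (Hphi_lt : forall y, y < Z R1 -> phi y < R1).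
  { intros y Hy. destruct (Rlt_or_le (phi y) R1) as [|Hge]; auto. exfalso.
    destruct (Hphi y) as [H1 H2]. assert (Z R1 <= Z (phi y)) by (apply HZle; lra).
    rewrite H2 in H3. revert H3. unfold cl, Rmax, Rmin. destruct (Rle_dec y (Z a)); destruct (Rle_dec 0 _); lra. }
  assert (Hphi_gt : forall y, Z R2 < y -> R2 < phi y).
  { intros y Hy. destruct (Rlt_or_le R2 (phi y)) as [|Hge]; auto. exfalso.
    destruct (Hphi y) as [H1 H2]. assert (Z (phi y) <= Z R2) by (apply HZle; lra).
    rewrite H2 in H3. revert H3. unfold cl, Rmax, Rmin. destruct (Rle_dec y (Z a)); destruct (Rle_dec 0 _); lra. }
  set (K := fun y => H (phi y)).
  set (Kd := fun y => Hd (phi y) / z (phi y)).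
  assert (HK_der : forall y, 0 < y < Z a -> is_derive K y (Kd y)).
  { intros y Hy. unfold K, Kd.
    assert (Hc := is_derive_comp H phi y (Hd (phi y)) (/ z (phi y)) (HH_der (phi y) (proj1 (Hphi y))) (Hphi_der y Hy)).
    replace (Hd (phi y) / z (phi y)) with (scal (/ z (phi y)) (Hd (phi y))); auto.
    unfold scal; simpl; unfold mult; simpl. unfold Rdiv. ring. }
  assert (HK : forall y, ex_derive K y /\ continuous (Derive K) y).
  { intro y. destruct (Rlt_or_le y (Z R1)) as [Hy1|Hy1].
    { apply (loc_const_C1 K (H 0) m_infty (Z R1)); simpl; auto.
      intros t _ Ht. unfold K. apply HHc1. split; [apply Hphi|]. apply Hphi_lt; auto. }
    destruct (Rlt_or_le (Z R2) y) as [Hy2|Hy2].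
    { apply (loc_const_C1 K (H a) (Z R2) p_infty); simpl; auto.
      intros t Ht _. unfold K. apply HHc2. split; [apply Hphi_gt; auto|apply Hphi]. }
    assert (Hy : 0 < y < Z a) by lra.
    split; [exists (Kd y); auto|].
    apply continuous_ext_loc with Kd.
    - apply (locally_interval _ y 0 (Z a)); simpl; try lra.
      intros t Ht1 Ht2. symmetry. apply is_derive_unique. apply HK_der. lra.
    - unfold Kd. assert (Hpy := Hphi y).
      assert (Hcp : continuous phi y) by (apply continuity_pt_filterlim; apply HphiC; auto).
      apply cont_div.
      + apply (continuous_comp phi Hd). auto. unfold Hd. apply cont_minus.
        * apply (continuous_ext (fun t => B * z t)); [reflexivity|]. apply cont_mult; auto. apply continuous_const.
        * apply Hwd_cont. apply Hpy.
      + apply (continuous_comp phi z); auto.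
      + assert (0 < z (phi y)); [|lra]. apply Hzpos. split; [apply Hphi_pos; lra|apply Hpy]. }
  exists (fun y => K y - B * y).
  split; [|split].
  -
    assert (Hfd : forall y, is_derive (fun y => K y - B * y) y (Derive K y - B)).
    { intro y. apply isd_minus. apply Derive_correct; apply HK.
      replace B with (B * 1) at 2 by ring. apply is_derive_scal. apply (is_derive_id y). }
    intro y. split; [exists (Derive K y - B); auto|].
    apply (continuous_ext (fun t => Derive K t - B)).
    { intro t. symmetry. apply is_derive_unique. auto. }
    apply cont_minus; [apply HK|apply continuous_const].
  -
    assert (HdZ : forall th s, Derive (fun t => radial Z t th) s = z s).
    { intros th s. apply is_derive_unique. exact (HZd s). }
    split; [|split].
    + intros r Hr. split; [exists (z r); auto|].
      apply (ex_derive_ext z). { intro t. symmetry. apply is_derive_unique. auto. }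
      auto.
    + intros r th Hr Hth. unfold LB.
      rewrite (Derive_ext (fun s => Derive (fun t => radial Z t th) s) z r (HdZ th)). rewrite HdZ.
      rewrite (Derive_ext (fun t => Derive (fun s => radial Z r s) t) (fun _ => 0) th).
      2: { intro t. exact (Derive_const (Z r) t). }
      rewrite Derive_const.
      unfold K. rewrite Hphi_Z by auto. unfold H.
      assert (Hps := Hpos r Hr). rewrite Hw_eq by lra. unfold p. field. lra.
    + intros th Hth. unfold dnu_0, dnu_a. rewrite !HdZ. unfold radial.
      rewrite HZ0, Hz1_0, Hz2_a. split; [ring|]. unfold alpha. fold (Z a). field. lra.
  -
    unfold K at 1. rewrite Hphi_Z by lra. unfold H. rewrite HZ0.
    assert (Hpa := Hpos a ltac:(lra)).
    rewrite Hw_eq by lra. rewrite Hz2_a, Hz2_a'.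
    assert (HLa : 0 < La) by (unfold La; apply Rmult_lt_0_compat; [|lra]; apply Rmult_lt_0_compat; [lra|exact PI_RGT_0]).
    assert (Hal : alpha < 0).
    { unfold alpha. fold (Z a). unfold Rdiv. assert (0 < beta * / Z a) by (apply Rmult_lt_0_compat; [lra|apply Rinv_0_lt_compat; lra]). lra. }
    replace (La * (Ha * alpha ^ 2 * Z a ^ 2 + alpha * Z a * (B * Z a - (p a * beta + -1) - B * Z a) + alpha ^ 3 * Z a ^ 2) +
      L0 * (H0 * alpha ^ 2 * 0 ^ 2 + alpha * 0 * (K 0 - B * 0) + alpha ^ 3 * 0 ^ 2))
      with (La * (- beta + alpha * beta ^ 2)).
    + assert (alpha * beta ^ 2 < 0) by (apply Rmult_neg_pos; [lra|apply pow_lt; lra]).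
      assert (0 < La * (beta - alpha * beta ^ 2)) by (apply Rmult_lt_0_compat; lra). nra.
    + unfold Ha, alpha, p. fold (Z a). field. lra.
Qed.
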